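(* Let $p=(p_1,\dots,p_n)$ be a sequence of positive integers, let $k=\min_i p_i$, and let $A,B\subseteq S_p$ be a cross-intersecting pair of families. Then $|A|\cdot|B|\le |S_p|^2/k^2$. Equality holds for $A=B=\{x\in S_p : x_i=j\}$ whenever $i\in[n]$ satisfies $p_i=k$ and $j\in[k]$. If $k\neq 2$, these are the only cross-intersecting pairs $(A,B)$ attaining equality.
   Context: For a positive integer $m$, $[m]=\{1,\dots,m\}$. For a sequence of positive integers $p=(p_1,\dots,p_n)$, $S_p=[p_1]\times\cdots\times[p_n]$; its elements are called vectors. Two vectors $x,y\in S_p$ are $r$-intersecting if $|\{i\in[n]: x_i=y_i\}|\ge r$. Two families $A,B\subseteq S_p$ are $r$-cross-intersecting if every $x\in A$ and $y\in B$ are $r$-intersecting; ''cross-intersecting'' means $1$-cross-intersecting. *)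

(* Defs.v *)
From HB Require Import structures.
From mathcomp Require Import all_boot all_order all_algebra.
Set Implicit Arguments. Unset Strict Implicit. Unset Printing Implicit Defensive.

(* S_p = [p_1] x ... x [p_n]; coordinates are 0-indexed: [p_i] is 'I_(p i). *)
Definition vec (n : nat) (p : 'I_n -> nat) : finType :=
  {dffun forall i : 'I_n, 'I_(p i)}.

Definition r_intersecting n (p : 'I_n -> nat) (r : nat) (x y : vec p) : bool :=
  r <= #|[set i : 'I_n | x i == y i]|.

Definition r_cross_intersecting n (p : 'I_n -> nat) (r : nat)
  (A B : {set vec p}) : Prop :=
  forall x y, x \in A -> y \in B -> r_intersecting r x y.

Definition cross_intersecting n (p : 'I_n -> nat) (A B : {set vec p}) : Prop :=
  r_cross_intersecting 1 A B.

(* k = min_i p_i, for n >= 1 written as n.+1 coordinates *)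
Definition pmin n (p : 'I_n.+1 -> nat) : nat := \big[minn/p ord0]_(i < n.+1) p i.

Definition dictator n (p : 'I_n -> nat) (i : 'I_n) (j : 'I_(p i)) : {set vec p} :=
  [set x : vec p | x i == j].

(* Main.v *)
Require Import Defs.
From HB Require Import structures.
From mathcomp Require Import all_boot all_order all_algebra.
From mathcomp Require Import ring lra zify.
Import Order.TTheory GRing.Theory Num.Theory.
Set Implicit Arguments. Unset Strict Implicit. Unset Printing Implicit Defensive.
Local Open Scope ring_scope.

Lemma sum_delta (T : finType) (a : T) (G : T -> rat) :
  \sum_(c : T) (a == c)%:R * G c = G a.
Proof.
rewrite (bigD1 a) //= eqxx mul1r big1 ?addr0 // => c /negbTE.
by rewrite eq_sym => ->; rewrite mul0r.
Qed.

Lemma coordG q (a e : 'I_q) (u v u' v' : rat) :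
  \sum_(c : 'I_q) ((a == c)%:R * u + v) * ((c == e)%:R * u' + v') =
  (a == e)%:R * (u * u') + (u * v' + v * u' + q%:R * (v * v')).
Proof.
rewrite (eq_bigr (fun c => (a == c)%:R * (((c == e)%:R * u' + v') * u) +
   ((e == c)%:R * (v * u') + v * v'))); last first.
  by move=> c _; rewrite [(e == c)]eq_sym; ring.
rewrite big_split /= sum_delta big_split /= sum_delta sumr_const card_ord.
rewrite -[(v * v') *+ q]mulr_natl; ring.
Qed.
Lemma sum_prod n (p : 'I_n -> nat) (F : forall i, 'I_(p i) -> rat) :
  \sum_(x : vec p) \prod_i F i (x i) = \prod_i \sum_(c : 'I_(p i)) F i c.
Proof.
rewrite (reindex (@dffun_of_fprod _ (fun i => 'I_(p i)))); last first.
  by apply: onW_bij; apply: dffun_of_fprod_bij.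
pose P_ := fun i => [ffun c : 'I_(p i) => F i c].
transitivity (\sum_(t : fprod (fun i => 'I_(p i))) \prod_(i in 'I_n) P_ i (t i)).
  by apply: eq_bigr => t _; apply: eq_bigr => i _; rewrite /P_ !ffunE.
rewrite big_fprod -(bigA_distr_big_dep _ (fun i j => untag 0 (P_ i) j)); apply: eq_bigr => i _.
rewrite -(big_tag P_ i); apply: eq_bigr => c _; by rewrite /P_ ffunE.
Qed.

Lemma alg4_aux (N s t m : rat) : 0 < t -> 1 <= m -> 0 < N * s ->
  N * s <= N ^+ 2 - (m ^+ 2 - 1) * t -> 4 * t <= s ^+ 2 ->
  (m + 1) ^+ 2 * t <= N ^+ 2.
Proof.
move=> t0 m1 Ns H1 H2.
have H3 : (N * s) ^+ 2 <= (N ^+ 2 - (m ^+ 2 - 1) * t) ^+ 2.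
  rewrite ler_sqr ?nnegrE; lra.
have H4 : 4 * t * N ^+ 2 <= (N ^+ 2 - (m ^+ 2 - 1) * t) ^+ 2.
  have : 4 * t * N ^+ 2 <= (N * s) ^+ 2.
    rewrite exprMn mulrC; apply: ler_wpM2l => //; exact: sqr_ge0.
  lra.
have H5 : 0 <= (N ^+ 2 - (m + 1) ^+ 2 * t) * (N ^+ 2 - (m - 1) ^+ 2 * t).
  have -> : (N ^+ 2 - (m + 1) ^+ 2 * t) * (N ^+ 2 - (m - 1) ^+ 2 * t) =
     (N ^+ 2 - (m ^+ 2 - 1) * t) ^+ 2 - 4 * t * N ^+ 2 by ring.
  lra.
rewrite leNgt; apply/negP => hc.
have H6 : (m - 1) ^+ 2 * t < N ^+ 2.
  have : (m - 1) ^+ 2 * t <= (m ^+ 2 - 1) * t by apply: ler_wpM2r; [lra | nra].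
  lra.
have : (N ^+ 2 - (m + 1) ^+ 2 * t) * (N ^+ 2 - (m - 1) ^+ 2 * t) < 0.
  by rewrite nmulr_rlt0 ?subr_gt0 // subr_lt0.
lra.
Qed.

Lemma h1 (N a b m : rat) : m ^+ 2 * (a * b) <= (N - a) * (N - b) -> N * (a + b) <= N ^+ 2 - (m ^+ 2 - 1) * (a * b).
Proof. move=> H. nra. Qed.

Lemma h2 (a b : rat) : 4 * (a * b) <= (a + b) ^+ 2.
Proof. have := sqr_ge0 (a - b); nra. Qed.

Lemma alg4 (N a b m : rat) : 0 < a -> 0 < b -> a <= N -> b <= N -> 1 <= m ->
  m ^+ 2 * (a * b) <= (N - a) * (N - b) -> (m + 1) ^+ 2 * (a * b) <= N ^+ 2.
Proof.
move=> a0 b0 aN bN m1 H.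
apply: (@alg4_aux N (a + b)) => //.
- by rewrite mulr_gt0.
- rewrite mulr_gt0 //; [lra | lra].
- exact: h1.
- exact: h2.
Qed.

Lemma alg_eq (N a b m : rat) : 0 < a -> 0 < b -> 0 < N -> 1 <= m ->
  m ^+ 2 * (a * b) <= (N - a) * (N - b) -> (m + 1) ^+ 2 * (a * b) = N ^+ 2 ->
  a = b /\ (m + 1) * a = N.
Proof.
move=> a0 b0 N0 m1 H E.
have H1 := h1 H; have H2 := h2 a b.
have H3 : N * ((m + 1) * (a + b)) <= N * (2 * N).
  have -> : N * (2 * N) = (m + 1) * N ^+ 2 - (m - 1) * ((m + 1) ^+ 2 * (a * b)) by rewrite E; ring.
  have : (m + 1) * (N * (a + b)) <= (m + 1) * (N ^+ 2 - (m ^+ 2 - 1) * (a * b)).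
    by apply: ler_wpM2l => //; lra.
  have -> : (m + 1) * (N ^+ 2 - (m ^+ 2 - 1) * (a * b)) = (m + 1) * N ^+ 2 - (m - 1) * ((m + 1) ^+ 2 * (a * b)) by ring.
  by rewrite mulrCA.
rewrite ler_pM2l // in H3.
have H4' := ler_wpM2l (sqr_ge0 (m + 1)) H2.
have H4 : 4 * N ^+ 2 <= ((m + 1) * (a + b)) ^+ 2 by rewrite exprMn -E; lra.
have H5 : ((m + 1) * (a + b)) ^+ 2 <= (2 * N) ^+ 2.
  rewrite ler_sqr ?nnegrE //; [| lra]; apply: mulr_ge0; lra.
have H6 : (m + 1) * (a + b) = 2 * N.
  apply/eqP; rewrite eq_le H3 /=; rewrite -ler_sqr ?nnegrE; [lra | lra |].
  apply: mulr_ge0; lra.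
have H7 : (m + 1) ^+ 2 * (a + b) ^+ 2 = (m + 1) ^+ 2 * (4 * (a * b)).
  by rewrite -exprMn H6 exprMn -E; ring.
have H8 : (a + b) ^+ 2 = 4 * (a * b).
  apply: (mulfI _ H7); rewrite sqrf_eq0; lra.
have ab : a = b.
  have : (a - b) ^+ 2 = 0.
    have -> : (a - b) ^+ 2 = (a + b) ^+ 2 - 4 * (a * b) by ring.
    by rewrite H8 subrr.
  by move/eqP; rewrite sqrf_eq0 subr_eq0 => /eqP.
split => //; rewrite -ab in H6; lra.
Qed.


Lemma bool4 (b1 b2 b3 b4 : bool) : (b1%:R - b2%:R : rat) = b3%:R - b4%:R ->
  (b1%:R - b2%:R : rat) != 0 -> b1 = b3.
Proof. by case: b1; case: b2; case: b3; case: b4. Qed.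

Section Spec.
Variables (n : nat) (p : 'I_n -> nat).
Hypothesis hp : forall i, (0 < p i)%N.
Local Notation V := (vec p).
Definition sp i : rat := (p i)%:R.
Definition wu (b : bool) : rat := if b then 1 else 0.
Definition wv i (b : bool) : rat := if b then - (sp i)^-1 else (sp i)^-1.
Definition w i b (a c : 'I_(p i)) : rat := (a == c)%:R * wu b + wv i b.
Definition K (t : {ffun 'I_n -> bool}) (x y : V) : rat :=
  \prod_i w (t i) (x i) (y i).
Definition Dk (x y : V) : rat := \prod_i (1 - (x i == y i)%:R).
Definition lam (t : {ffun 'I_n -> bool}) : rat :=
  \prod_i (if t i then -1 else sp i - 1).
Definition P t (h : V -> rat) x := \sum_y K t x y * h y.
Definition Q t h g := \sum_x P t h x * P t g x.

Lemma sp_neq0 i : sp i != 0.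
Proof. by rewrite /sp pnatr_eq0 -lt0n hp. Qed.

Lemma spV i : sp i * (sp i)^-1 = 1.
Proof. by rewrite mulfV // sp_neq0. Qed.

Lemma prod_eq_ind (x y : V) : \prod_i ((x i == y i)%:R : rat) = (x == y)%:R.
Proof.
case: (eqVneq x y) => [->|neq]; first by rewrite big1 // => i _; rewrite eqxx.
case: (pickP (fun i => x i != y i)) => [i Hi|H].
  by rewrite (bigD1 i) //= (negbTE Hi) mul0r.
by case/eqP: neq; apply/ffunP => i; move: (H i) => /negbFE/eqP.
Qed.

Lemma sumK x y : \sum_t K t x y = (x == y)%:R.
Proof.
rewrite /K -(bigA_distr_bigA (fun i b => w b (x i) (y i))) -prod_eq_ind.
apply: eq_bigr => i _; rewrite big_bool /w /wu /wv /=; ring.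
Qed.

Lemma Ksym t x y : K t x y = K t y x.
Proof. by apply: eq_bigr => i _; rewrite /w eq_sym. Qed.

Lemma KK t x y : \sum_z K t x z * K t z y = K t x y.
Proof.
rewrite /K (eq_bigr (fun z : V => \prod_i (w (t i) (x i) (z i) * w (t i) (z i) (y i)))); last by move=> z _; rewrite big_split.
rewrite (sum_prod (fun i c => w (t i) (x i) c * w (t i) c (y i))).
apply: eq_bigr => i _; rewrite /w coordG -/(sp i).
have := sp_neq0 i; case: (t i); rewrite /wu /wv /= => H; by field.
Qed.

Lemma DK t x y : \sum_z Dk x z * K t z y = lam t * K t x y.
Proof.
rewrite /K /Dk /lam -big_split /= (eq_bigr (fun z : V => \prod_i ((1 - (x i == z i)%:R) * w (t i) (z i) (y i)))); last by move=> z _; rewrite big_split.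
rewrite (sum_prod (fun i c => (1 - (x i == c)%:R) * w (t i) c (y i))).
apply: eq_bigr => i _.
rewrite (eq_bigr (fun c => ((x i == c)%:R * (-1) + 1) * w (t i) c (y i))); last by move=> c _; ring.
rewrite /w.
rewrite coordG -/(sp i).
have := sp_neq0 i; case: (t i); rewrite /wu /wv /= => H; by field.
Qed.

Lemma decomp h x : h x = \sum_t P t h x.
Proof.
rewrite /P exchange_big /=.
rewrite (eq_bigr (fun y => (x == y)%:R * h y)); last by move=> y _; rewrite -mulr_suml sumK.
by rewrite sum_delta.
Qed.

Lemma QP t h g : Q t h g = \sum_x h x * P t g x.
Proof.
rewrite /Q /P.
transitivity (\sum_x \sum_y h y * (K t y x * \sum_z K t x z * g z)).
  apply: eq_bigr => x _; rewrite mulr_suml; apply: eq_bigr => y _.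
  by rewrite Ksym; ring.
rewrite exchange_big /=; apply: eq_bigr => y _; rewrite -mulr_sumr; congr (_ * _).
transitivity (\sum_(x : V) \sum_(z : V) K t y x * K t x z * g z).
  by apply: eq_bigr => x _; rewrite mulr_sumr; apply: eq_bigr => z _; ring.
rewrite exchange_big /=; apply: eq_bigr => z _.
by rewrite -(KK t y z) mulr_suml.
Qed.

Lemma Dsum f g :
  \sum_x \sum_y f x * Dk x y * g y = \sum_t lam t * Q t f g.
Proof.
transitivity (\sum_t \sum_x \sum_y \sum_z f x * Dk x y * K t y z * g z).
  symmetry; rewrite exchange_big /=; apply: eq_bigr => x _.
  rewrite exchange_big /=; apply: eq_bigr => y _.
  rewrite [g y]decomp /P !mulr_sumr; apply: eq_bigr => t _.
  by rewrite mulr_sumr; apply: eq_bigr => z _; ring.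
apply: eq_bigr => t _; rewrite QP mulr_sumr; apply: eq_bigr => x _.
rewrite /P mulr_sumr mulr_sumr exchange_big /=; apply: eq_bigr => z _.
transitivity (f x * (\sum_y Dk x y * K t y z) * g z).
  by rewrite mulr_sumr mulr_suml; apply: eq_bigr => y _; ring.
by rewrite DK; ring.
Qed.

Definition t0 : {ffun 'I_n -> bool} := [ffun _ => false].
Definition Nr : rat := \prod_i sp i.
Definition dd : rat := \prod_i (sp i - 1).

Lemma sp_gt0 i : 0 < sp i.
Proof. by rewrite /sp ltr0n hp. Qed.

Lemma Nr_gt0 : 0 < Nr.
Proof. by apply: prodr_gt0 => i _; apply: sp_gt0. Qed.

Lemma sum1 : \sum_(x : V) (1 : rat) = Nr.
Proof.
transitivity (\sum_(x : V) \prod_(i < n) (1 : rat)); first by apply: eq_bigr => x _; rewrite big1.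
rewrite (sum_prod (fun i (c : 'I_(p i)) => (1 : rat))).
by apply: eq_bigr => i _; rewrite sumr_const card_ord.
Qed.

Lemma cardV : (#|V|)%:R = Nr :> rat.
Proof. by rewrite -sum1 sumr_const. Qed.

Lemma lam0 : lam t0 = dd.
Proof. by apply: eq_bigr => i _; rewrite ffunE. Qed.

Lemma P0 h x : P t0 h x = Nr^-1 * \sum_y h y.
Proof.
rewrite /P mulr_sumr; apply: eq_bigr => y _; congr (_ * _).
rewrite /K /Nr -prodfV; apply: eq_bigr => i _; rewrite ffunE /w /wu /wv /=; ring.
Qed.

Lemma Q0 h g : Q t0 h g = Nr^-1 * (\sum_y h y) * (\sum_y g y).
Proof.
rewrite /Q (eq_bigr (fun x => (Nr^-1 * (\sum_y h y) * (Nr^-1 * (\sum_y g y))))).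
  rewrite sumr_const -mulr_natl cardV; have := Nr_gt0; rewrite lt0r => /andP[H _].
  set S := \sum_y h y; set T := \sum_y g y; by field.
by move=> x _; rewrite !P0.
Qed.

Lemma Qsum h g : \sum_t Q t h g = \sum_x h x * g x.
Proof.
under eq_bigr do rewrite QP.
rewrite exchange_big /=; apply: eq_bigr => x _.
by rewrite -mulr_sumr -decomp.
Qed.

Lemma sumP t h : t != t0 -> \sum_x P t h x = 0.
Proof.
move=> nt.
have [j tj] : exists j, t j.
  case: (pickP (fun j => t j)) => [j tj|H]; first by exists j.
  by case/eqP: nt; apply/ffunP => j; rewrite ffunE H.
rewrite /P exchange_big /= big1 // => y _; rewrite -mulr_suml.
rewrite /K (sum_prod (fun i c => w (t i) c (y i))) (bigD1 j) //=.
rewrite /w tj /wu /wv /=.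
rewrite (eq_bigr (fun c => (y j == c)%:R * 1 + (- (sp j)^-1))); last first.
  by move=> c _; rewrite eq_sym.
rewrite big_split /= sum_delta sumr_const card_ord -mulr_natl -/(sp j).
rewrite mulrN spV; ring.
Qed.

Definition ej (j : 'I_n) : {ffun 'I_n -> bool} := [ffun i => i == j].

Lemma Pdep j h (x x' : V) : x j = x' j -> P (ej j) h x = P (ej j) h x'.
Proof.
move=> E; apply: eq_bigr => y _; congr (_ * _); apply: eq_bigr => i _.
rewrite ffunE; case: (eqVneq i j) => [->|ne]; first by rewrite E.
by rewrite /w /wu /= !mulr0.
Qed.

Lemma Q_ge0 t h : 0 <= Q t h h.
Proof. by apply: sumr_ge0 => x _; rewrite -expr2 sqr_ge0. Qed.

Lemma Q_eq0 t h : Q t h h = 0 -> forall x, P t h x = 0.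
Proof.
move=> H x.
have H' := @psumr_eq0P _ V predT (fun x => P t h x * P t h x)
  (fun x _ => eq_ind _ (fun z => 0 <= z) (sqr_ge0 (P t h x)) _ (expr2 _)) H.
by have /eqP := H' x isT; rewrite mulf_eq0 orbb => /eqP.
Qed.

Section Lam.
Variable k : nat.
Hypothesis hk2 : (2 <= k)%N.
Hypothesis hkp : forall i, (k <= p i)%N.

Definition absl (t : {ffun 'I_n -> bool}) : rat :=
  \prod_i (if t i then 1 else sp i - 1).
Definition cl (t : {ffun 'I_n -> bool}) : rat :=
  \prod_i (if t i then sp i - 1 else 1).

Lemma sp_ge i : k%:R <= sp i.
Proof. by rewrite /sp ler_nat hkp. Qed.

Lemma k_ge2 : 2 <= k%:R :> rat.
Proof. by rewrite (ler_nat _ 2 k). Qed.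

Lemma sp1_ge i : 1 <= sp i - 1.
Proof. have := sp_ge i; have := k_ge2; lra. Qed.

Lemma norm_lam t : `|lam t| = absl t.
Proof.
rewrite normr_prod; apply: eq_bigr => i _; case: (t i); first by rewrite normrN normr1.
by apply: ger0_norm; have := sp1_ge i; lra.
Qed.

Lemma absl_gt0 t : 0 < absl t.
Proof. apply: prodr_gt0 => i _; case: (t i) => //; have := sp1_ge i; lra. Qed.

Lemma dd_split t : dd = cl t * absl t.
Proof. by rewrite /dd -big_split; apply: eq_bigr => i _; case: (t i) => /=; ring. Qed.

Lemma prod_ge1 (S : pred 'I_n) (E : 'I_n -> rat) :
  (forall i, 1 <= E i) -> 1 <= \prod_(i | S i) E i.
Proof.
move=> H; have := @ler_prod _ _ (index_enum 'I_n) S (fun _ => 1) E.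
rewrite big1 //; apply=> i _; by rewrite ler01 H.
Qed.

Lemma ifE_ge1 t i : 1 <= (if t i then sp i - 1 else 1).
Proof. by case: (t i) => //; apply: sp1_ge. Qed.

Lemma tnz t : t != t0 -> exists j, t j.
Proof.
move=> nt; case: (pickP (fun j => t j)) => [j tj|H]; first by exists j.
by case/eqP: nt; apply/ffunP => j; rewrite ffunE H.
Qed.

Lemma cl_ge t : t != t0 -> k%:R - 1 <= cl t.
Proof.
move=> /tnz [j tj]; rewrite /cl (bigD1 j) //= tj.
have R1 := prod_ge1 (fun i => i != j) (fun i => ifE_ge1 t i).
have := sp_ge j; have := k_ge2; nra.
Qed.

Lemma lam_bound t : t != t0 -> (k%:R - 1) * `|lam t| <= dd.
Proof.
move=> nt; rewrite norm_lam (dd_split t) ler_pM2r ?absl_gt0 //.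
exact: cl_ge.
Qed.

Lemma lam_ej_le0 j : lam (ej j) <= 0.
Proof.
rewrite /lam (bigD1 j) //= ffunE eqxx mulN1r oppr_le0.
apply: prodr_ge0 => i /negbTE ne; rewrite ffunE ne; have := sp1_ge i; lra.
Qed.

Lemma lam_eq t : (3 <= k)%N -> t != t0 -> (k%:R - 1) * `|lam t| = dd ->
  exists j, t = ej j /\ p j = k.
Proof.
move=> k3 nt; rewrite norm_lam (dd_split t) => /eqP.
rewrite (inj_eq (mulIf _)); last by rewrite lt0r_neq0 // absl_gt0.
move: (nt) => /tnz [j tj] /eqP; rewrite /cl (bigD1 j) //= tj.
have R1 := prod_ge1 (fun i => i != j) (fun i => ifE_ge1 t i).
set R := \prod_(i | i != j) _ in R1 *.
have k3' : 3 <= k%:R :> rat by rewrite (ler_nat _ 3 k).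
have spj := sp_ge j => E.
have R_1 : R = 1 by nra.
exists j; split.
  apply/ffunP => l; rewrite ffunE; case: (eqVneq l j) => [->//|ne].
  apply/negbTE/negP => tl; move: R_1; rewrite /R (bigD1 l) //= tl.
  have R2 := prod_ge1 (fun i => (i != j) && (i != l)) (fun i => ifE_ge1 t i).
  have := sp_ge l; nra.
apply/eqP; rewrite -(eqr_nat rat); apply/eqP; rewrite -/(sp j); nra.
Qed.

Lemma slack_alg (d m l S Z : rat) : 0 <= S + Z -> 0 <= S - Z -> 0 <= m ->
  m * `|l| <= d -> 0 <= d * S + m * l * Z.
Proof.
move=> H1 H2 Hm Hd; have S0 : 0 <= S by lra.
have HdS : m * `|l| * S <= d * S by apply: ler_wpM2r.
case: (lerP 0 l) => hl.
  rewrite ger0_norm // in HdS; have := mulr_ge0 (mulr_ge0 Hm hl) H1; nra.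
rewrite ltr0_norm // in HdS.
have hl' : 0 <= - l by lra.
have := mulr_ge0 (mulr_ge0 Hm hl') H2; nra.
Qed.

Lemma Qquad t f g (u v : rat) :
  0 <= u ^+ 2 * Q t f f + v ^+ 2 * Q t g g + 2 * u * v * Q t f g.
Proof.
have : 0 <= \sum_x (u * P t f x + v * P t g x) ^+ 2.
  by apply: sumr_ge0 => x _; apply: sqr_ge0.
rewrite (eq_bigr (fun x => u ^+ 2 * (P t f x * P t f x) + v ^+ 2 * (P t g x * P t g x)
   + 2 * u * v * (P t f x * P t g x))); last by move=> x _; ring.
by rewrite !big_split /= -!mulr_sumr.
Qed.

Lemma slack_t t f g (u v : rat) : t != t0 ->
  0 <= dd * (u ^+ 2 * Q t f f + v ^+ 2 * Q t g g) +
       (k%:R - 1) * lam t * (2 * u * v * Q t f g).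
Proof.
move=> nt; apply: slack_alg.
- by have := Qquad t f g u v; lra.
- by have := Qquad t f g u (- v); rewrite sqrrN; lra.
- by have := k_ge2; lra.
exact: lam_bound.
Qed.

Definition Fs f g (u v : rat) t := dd * (u ^+ 2 * Q t f f + v ^+ 2 * Q t g g) +
       (k%:R - 1) * lam t * (2 * u * v * Q t f g).

Lemma sumFs f g (u v : rat) :
  \sum_x \sum_y f x * Dk x y * g y = 0 ->
  \sum_(t | t != t0) Fs f g u v t =
  dd * (u ^+ 2 * (\sum_x f x * f x - Q t0 f f) +
             v ^+ 2 * (\sum_x g x * g x - Q t0 g g)) -
       (k%:R - 1) * dd * (2 * u * v * Q t0 f g).
Proof.
move=> H0; pose F := Fs f g u v.
have E : \sum_t F t = F t0 + \sum_(t | t != t0) F t by apply: bigD1.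
have E2 : \sum_t F t = dd * (u ^+ 2 * (\sum_x f x * f x) + v ^+ 2 * (\sum_x g x * g x))
   + (k%:R - 1) * (2 * u * v) * (\sum_t lam t * Q t f g).
  rewrite -!Qsum /F /Fs big_split /= -mulr_sumr big_split /= -!mulr_sumr.
  congr (_ + _); rewrite mulr_sumr; apply: eq_bigr => t _; ring.
rewrite -Dsum H0 in E2.
have E3 : \sum_(t | t != t0) F t = \sum_t F t - F t0 by rewrite E; lra.
rewrite E3 E2 /F /Fs lam0; ring.
Qed.

Lemma main_ineq f g (u v : rat) :
  \sum_x \sum_y f x * Dk x y * g y = 0 ->
  0 <= dd * (u ^+ 2 * (\sum_x f x * f x - Q t0 f f) +
             v ^+ 2 * (\sum_x g x * g x - Q t0 g g)) -
       (k%:R - 1) * dd * (2 * u * v * Q t0 f g).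
Proof.
move=> H0; rewrite -(sumFs u v H0); apply: sumr_ge0 => t; exact: slack_t.
Qed.

Lemma dd_gt0 : 0 < dd.
Proof. by apply: prodr_gt0 => i _; have := sp1_ge i; lra. Qed.

Lemma PB t f g x : P t (fun y => f y - g y) x = P t f x - P t g x.
Proof. by rewrite /P -sumrB; apply: eq_bigr => y _; ring. Qed.

Lemma eq_case f g : (3 <= k)%N ->
  \sum_x \sum_y f x * Dk x y * g y = 0 ->
  dd * ((\sum_x f x * f x - Q t0 f f) + (\sum_x g x * g x - Q t0 g g)) -
       (k%:R - 1) * dd * (2 * Q t0 f g) = 0 ->
  forall t, t != t0 -> (forall x, P t f x = P t g x) /\
     ((forall x, P t f x = 0) \/ exists j, t = ej j /\ p j = k).
Proof.
move=> k3 H0 Htot t nt.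
have Hs := sumFs 1 1 H0; rewrite !expr1n !mul1r !mulr1 Htot in Hs.
have Ft := @psumr_eq0P _ _ (fun t => t != t0) (Fs f g 1 1)
  (fun t nt => slack_t f g 1 1 nt) Hs t nt.
move: Ft; rewrite /Fs !expr1n !mul1r !mulr1 => Ft.
have Hb := lam_bound nt.
have Hff := Q_ge0 t f; have Hgg := Q_ge0 t g.
have Hm : 0 <= k%:R - 1 :> rat by have := k_ge2; lra.
have Hq1 := Qquad t f g 1 1; have Hq2 := Qquad t f g 1 (-1).
rewrite !expr1n !mul1r !mulr1 in Hq1; rewrite sqrrN !expr1n !mul1r mulrN1 in Hq2.
have Hsl := @slack_alg ((k%:R - 1) * `|lam t|) (k%:R - 1) (lam t)
   (Q t f f + Q t g g) (2 * Q t f g) ltac:(lra) ltac:(lra) Hm (lexx _).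
case: (ltrP ((k%:R - 1) * `|lam t|) dd) => hlt.
  have HQ : Q t f f + Q t g g = 0 by nra.
  have Qf0 : Q t f f = 0 by lra.
  have Qg0 : Q t g g = 0 by lra.
  split; last by left; apply: Q_eq0.
  by move=> x; rewrite (Q_eq0 Qf0) (Q_eq0 Qg0).
have Heq : (k%:R - 1) * `|lam t| = dd by apply/eqP; rewrite eq_le hlt Hb.
have [j [tj pj]] := lam_eq k3 nt Heq.
split; last by right; exists j.
have hl : lam t <= 0 by rewrite tj; apply: lam_ej_le0.
rewrite ler0_norm // in Heq.
have ddp := dd_gt0.
have HQ : Q t f f + Q t g g - 2 * Q t f g = 0 by nra.
have HQ' : Q t (fun y => f y - g y) (fun y => f y - g y) = 0.
  rewrite -HQ /Q (eq_bigr (fun x => P t f x * P t f x + P t g x * P t g x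
     - 2 * (P t f x * P t g x))); last by move=> x _; rewrite PB; ring.
  by rewrite !big_split /= sumrN -mulr_sumr.
by move=> x; have := Q_eq0 HQ' x; rewrite PB => /eqP; rewrite subr_eq0 => /eqP.
Qed.

Definition ind (A : {set V}) (x : V) : rat := (x \in A)%:R.

Lemma indsq A x : ind A x * ind A x = ind A x.
Proof. by rewrite /ind; case: (x \in A); rewrite ?mul1r ?mul0r. Qed.

Lemma sum_ind A : \sum_x ind A x = #|A|%:R.
Proof. by rewrite /ind -sumr_const [RHS]big_mkcond; apply: eq_bigr => x _; case: (x \in A). Qed.

Lemma Dk0 (x y : V) i : x i = y i -> Dk x y = 0.
Proof. by move=> E; rewrite /Dk (bigD1 i) //= E eqxx subrr mul0r. Qed.

Lemma Dk1 (x y : V) : (forall i, x i != y i) -> Dk x y = 1.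
Proof. by move=> H; rewrite /Dk big1 // => i _; rewrite (negbTE (H i)) subr0. Qed.

Lemma cross_D0 (A B : {set V}) : cross_intersecting A B ->
  \sum_x \sum_y ind A x * Dk x y * ind B y = 0.
Proof.
move=> H; apply: big1 => x _; apply: big1 => y _.
rewrite /ind; case xA: (x \in A); last by rewrite !mul0r.
case yB: (y \in B); last by rewrite mulr0.
have := H x y xA yB; rewrite /r_intersecting card_gt0 => /set0Pn [i].
by rewrite inE => /eqP E; rewrite (Dk0 E) mulr0 mul0r.
Qed.

Lemma disj_notint (x y : V) : (forall i, x i != y i) -> ~~ r_intersecting 1 x y.
Proof.
move=> H; rewrite /r_intersecting card_gt0 negbK; apply/eqP/setP => i.
by rewrite inE in_set0 (negbTE (H i)).
Qed.

Lemma Nr_card : Nr = #|[set: V]|%:R.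
Proof. by rewrite cardsT cardV. Qed.

Lemma key_ineq (A B : {set V}) (u v a b : rat) : cross_intersecting A B ->
  a = #|A|%:R -> b = #|B|%:R ->
  2 * u * v * (k%:R - 1) * a * b <= u ^+ 2 * a * (Nr - a) + v ^+ 2 * b * (Nr - b).
Proof.
move=> H Ha Hb; have := main_ineq u v (cross_D0 H).
rewrite !Q0 (eq_bigr _ (fun x _ => indsq A x)) (eq_bigr _ (fun x _ => indsq B x)).
rewrite !sum_ind -Ha -Hb => H1.
have Np := Nr_gt0; have dp := dd_gt0.
have H2 : 0 <= dd * Nr^-1 * (u ^+ 2 * a * (Nr - a) + v ^+ 2 * b * (Nr - b) -
      2 * u * v * (k%:R - 1) * a * b).
  move: H1; set X := _ - _; set Y := _ * (_ - _).
  suff -> : X = Y by [].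
  rewrite /X /Y; have : Nr != 0 by rewrite lt0r_neq0.
  by move=> Hn; field.
have c0 : 0 < dd * Nr^-1 by rewrite mulr_gt0 // invr_gt0.
move: H2; rewrite pmulr_rge0 // => H2; lra.
Qed.

Lemma quad_to (Pp Qq Kk : rat) :
  (forall u v, 2 * u * v * Kk <= u ^+ 2 * Pp + v ^+ 2 * Qq) -> 0 < Qq -> Kk ^+ 2 <= Pp * Qq.
Proof.
move=> H Q0; have := H Qq Kk.
have -> : 2 * Qq * Kk * Kk = Qq * (2 * Kk ^+ 2) by ring.
have -> : Qq ^+ 2 * Pp + Kk ^+ 2 * Qq = Qq * (Qq * Pp + Kk ^+ 2) by ring.
rewrite ler_pM2l // => H1; nra.
Qed.

Lemma card_le (A : {set V}) : (#|A|%:R : rat) <= Nr.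
Proof. by rewrite -cardV ler_nat max_card. Qed.

Lemma mk_quad (A B : {set V}) : cross_intersecting A B ->
  0 < (#|A|%:R : rat) -> 0 < (#|B|%:R : rat) ->
  (k%:R - 1) ^+ 2 * (#|A|%:R * #|B|%:R) <= (Nr - #|A|%:R) * (Nr - #|B|%:R).
Proof.
move=> H a0 b0; set a := (#|A|%:R : rat) in a0 *; set b := (#|B|%:R : rat) in b0 *.
have Hk := fun u v => @key_ineq A B u v a b H erefl erefl.
have aN : a <= Nr by apply: card_le.
have bN : b <= Nr by apply: card_le.
have k2 := k_ge2.
case: (ltrP b Nr) => hb; last first.
  have bE : b = Nr by apply/eqP; rewrite eq_le bN hb.
  have := Hk 1 1; rewrite bE subrr !expr1n !mul1r mulr0 addr0 => H1.
  have : 2 * (k%:R - 1) * a * Nr <= a * Nr by nra.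
  have Np := Nr_gt0; have := mulr_gt0 a0 Np; nra.
have Q0 : 0 < b * (Nr - b) by rewrite mulr_gt0 // subr_gt0.
have := @quad_to (a * (Nr - a)) (b * (Nr - b)) ((k%:R - 1) * a * b).
move/(_ (fun u v => ltac:(have := Hk u v; lra)) Q0) => H2.
have ab0 : 0 < a * b by rewrite mulr_gt0.
have -> : (k%:R - 1) ^+ 2 * (a * b) = ((k%:R - 1) * a * b) ^+ 2 / (a * b).
  by field; rewrite !lt0r_neq0.
rewrite ler_pdivrMr //.
have -> : (Nr - a) * (Nr - b) * (a * b) = a * (Nr - a) * (b * (Nr - b)) by ring.
done.
Qed.

Lemma bound_rat (A B : {set V}) : cross_intersecting A B ->
  k%:R ^+ 2 * (#|A|%:R * #|B|%:R) <= Nr ^+ 2 :> rat.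
Proof.
move=> H; case: (posnP #|A|) => [->|a0]; first by rewrite mul0r mulr0 sqr_ge0.
case: (posnP #|B|) => [->|b0]; first by rewrite mulr0 mulr0 sqr_ge0.
have a0' : 0 < (#|A|%:R : rat) by rewrite ltr0n.
have b0' : 0 < (#|B|%:R : rat) by rewrite ltr0n.
have m1 : 1 <= (k%:R : rat) - 1 by have := k_ge2; lra.
have := alg4 a0' b0' (card_le A) (card_le B) m1 (mk_quad H a0' b0').
by rewrite subrK.
Qed.

Definition upd (x : V) (j : 'I_n) (c : 'I_(p j)) : V :=
  [ffun l => if l == j then insubd (x l) (val c) else x l].

Lemma upd_same x j (c : 'I_(p j)) : upd x c j = c.
Proof. by apply: val_inj; rewrite ffunE eqxx /= val_insubd ltn_ord. Qed.

Lemma upd_other x j (c : 'I_(p j)) l : l != j -> upd x c l = x l.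
Proof. by move=> ne; rewrite ffunE (negbTE ne). Qed.

Definition shift (x : V) : V := [ffun l => Ordinal (ltn_pmod (x l).+1 (hp l))].

Lemma shift_ne x l : shift x l != x l.
Proof.
rewrite ffunE; apply/eqP => /(congr1 val) /=.
have := hkp l; have := ltn_ord (x l); move: (nat_of_ord (x l)) => c.
case: (ltnP c.+1 (p l)) => h1 h2 h3.
  by rewrite modn_small // => /eqP; rewrite eqn_leq ltnn.
have E : c.+1 = p l by apply/eqP; rewrite eqn_leq h2 h1.
rewrite E modnn => c0; move: E; rewrite -c0 => E.
by move: h3 hk2; rewrite -E; case: k => [|[|]].
Qed.

Lemma ej_nt j : ej j != t0.
Proof. by apply/eqP => /ffunP /(_ j); rewrite !ffunE eqxx. Qed.

Lemma uniq_main (A B : {set V}) : (3 <= k)%N -> cross_intersecting A B ->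
  k%:R ^+ 2 * (#|A|%:R * #|B|%:R) = Nr ^+ 2 :> rat ->
  exists j (c : 'I_(p j)), p j = k /\ A = dictator c /\ B = dictator c.
Proof.
move=> k3 H E.
have Np := Nr_gt0.
have a0 : 0 < (#|A|%:R : rat).
  case: (posnP #|A|) => [a0|]; last by rewrite ltr0n.
  move: E; rewrite a0 mul0r mulr0 => /esym/eqP; rewrite sqrf_eq0 => /eqP N0.
  by move: Np; rewrite N0 ltxx.
have b0 : 0 < (#|B|%:R : rat).
  case: (posnP #|B|) => [b0|]; last by rewrite ltr0n.
  move: E; rewrite b0 !mulr0 => /esym/eqP; rewrite sqrf_eq0 => /eqP N0.
  by move: Np; rewrite N0 ltxx.
have m1 : 1 <= (k%:R : rat) - 1 by have := k_ge2; lra.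
have E' : ((k%:R : rat) - 1 + 1) ^+ 2 * (#|A|%:R * #|B|%:R) = Nr ^+ 2 by rewrite subrK.
have [ab ka] := alg_eq a0 b0 Np m1 (mk_quad H a0 b0) E'.
rewrite subrK in ka.
have kp : 0 < (k%:R : rat) by have := k_ge2; lra.
have Htot : dd * ((\sum_x ind A x * ind A x - Q t0 (ind A) (ind A)) +
    (\sum_x ind B x * ind B x - Q t0 (ind B) (ind B))) -
    (k%:R - 1) * dd * (2 * Q t0 (ind A) (ind B)) = 0.
  rewrite !Q0 (eq_bigr _ (fun x _ => indsq A x)) (eq_bigr _ (fun x _ => indsq B x)).
  rewrite !sum_ind -ab -ka; field; rewrite !lt0r_neq0 //.
have EC := eq_case k3 (cross_D0 H) Htot.
have fg : forall x, ind A x = ind B x.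
  move=> x; rewrite (decomp (ind A) x) (decomp (ind B) x); apply: eq_bigr => t _.
  case: (eqVneq t t0) => [->|nt]; first by rewrite !P0 !sum_ind ab.
  by case: (EC t nt) => ->.
have AB : A = B.
  apply/setP => x; move: (fg x); rewrite /ind => /eqP; rewrite eqr_nat.
  by case: (x \in A); case: (x \in B).
subst B.
have Hprop t : t != t0 -> (forall x, P t (ind A) x = 0) \/ exists j, t = ej j /\ p j = k.
  by move=> nt; case: (EC t nt).
have [x0 x0A] : exists x0, x0 \in A.
  by move: a0; rewrite ltr0n card_gt0 => /set0Pn.
have [j /andP[/eqP pj /existsP[x1 phx1]]] :
    exists j, (p j == k) && [exists x, P (ej j) (ind A) x != 0].
  case: (pickP (fun j => (p j == k) && [exists x, P (ej j) (ind A) x != 0])) => [j Hj|Hn].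
    by exists j.
  exfalso.
  have : ind A x0 = Nr^-1 * #|A|%:R.
    rewrite (decomp (ind A) x0) (bigD1 t0) //= big1 ?addr0; first by rewrite P0 sum_ind.
    move=> t nt; case: (Hprop t nt) => [->//|[l [tl pl]]].
    move: (Hn l); rewrite pl eqxx /= => /negbT; rewrite negb_exists => /forallP /(_ x0).
    by rewrite negbK tl => /eqP.
  rewrite /ind x0A -ka invfM -mulrA mulVf ?lt0r_neq0 // mulr1 => h1.
  have := congr1 GRing.inv h1; rewrite invrK invr1 => kE.
  have k3' : 3 <= (k%:R : rat) by rewrite (ler_nat _ 3 k).
  lra.
pose phi := P (ej j) (ind A).
have diff (z : V) (c : 'I_(p j)) : ind A z - ind A (upd z c) = phi z - phi (upd z c).
  rewrite (decomp (ind A) z) (decomp (ind A) (upd z c)) -sumrB (bigD1 (ej j)) //=.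
  rewrite big1 ?addr0 // => t tne.
  case: (eqVneq t t0) => [->|nt]; first by rewrite !P0 subrr.
  case: (Hprop t nt) => [H0 | [l [tl pl]]]; first by rewrite !H0 subrr.
  rewrite tl; apply/eqP; rewrite subr_eq0; apply/eqP; apply: Pdep.
  rewrite upd_other //; apply/eqP => lj; move: tne; rewrite tl lj eqxx.
  by [].
have sumphi : \sum_z phi z = 0 by apply: sumP; apply: ej_nt.
have Hdep (x y : V) : x j = y j -> ind A x = ind A y.
  move=> xy.
  have [c hc] : exists c : 'I_(p j), phi (upd x c) != phi x.
    case: (pickP (fun c : 'I_(p j) => phi (upd x c) != phi x)) => [c hc|Hn].
      by exists c.
    exfalso.
    have cst : forall z, phi z = phi x.
      move=> z; rewrite -(eqP (negbFE (Hn (z j)))); apply: Pdep.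
      by rewrite upd_same.
    move: sumphi; rewrite (eq_bigr _ (fun z _ => cst z)) sumr_const => /eqP.
    rewrite -mulr_natl cardV mulf_eq0 (negbTE (lt0r_neq0 Np)) /= => /eqP phx.
    by move: phx1; rewrite -/phi (cst x1) phx eqxx.
  suff E1 : (x \in A) = (y \in A) by rewrite /ind E1.
  have e1 : ind A x - ind A (upd x c) = ind A y - ind A (upd y c).
    rewrite !diff; congr (_ - _); first by apply: Pdep.
    by apply: Pdep; rewrite !upd_same.
  have e2 : ind A x - ind A (upd x c) != 0 by rewrite diff subr_eq0 eq_sym.
  exact: (bool4 e1 e2).
exists j, (x0 j); split => //.
have AD : A = dictator (x0 j).
  apply/setP => y; rewrite /dictator inE.
  case: (eqVneq (y j) (x0 j)) => [yc|ync].
    have := Hdep y x0 yc; rewrite /ind x0A => /eqP; rewrite eqr_nat.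
    by case: (y \in A).
  apply/negP => yA.
  pose z := upd (shift y) (x0 j).
  have zA : z \in A.
    have := Hdep z x0 (upd_same _ _); rewrite /ind x0A => /eqP; rewrite eqr_nat.
    by case: (z \in A).
  have := H z y zA yA; apply/negP; apply: disj_notint => l.
  case: (eqVneq l j) => [->|ne]; first by rewrite upd_same eq_sym.
  by rewrite upd_other // shift_ne.
by [].
Qed.

Lemma card_dict j (c : 'I_(p j)) : (#|dictator c|%:R : rat) * sp j = Nr.
Proof.
pose F := fun l (d : 'I_(p l)) => if l == j then ((val d == val c)%:R : rat) else 1.
have E1 : (#|dictator c|%:R : rat) = \sum_(x : V) \prod_l F l (x l).
  rewrite -sum_ind; apply: eq_bigr => x _.
  rewrite (bigD1 j) //= big1 ?mulr1; last by move=> l /negbTE ne; rewrite /F ne.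
  by rewrite /F eqxx /ind /dictator inE val_eqE.
rewrite E1 sum_prod /Nr [in LHS](bigD1 j) //= [in RHS](bigD1 j) //= mulrAC; congr (_ * _).
  rewrite /F eqxx (eq_bigr (fun d => (c == d)%:R * 1)); last first.
    by move=> d _; rewrite mulr1 eq_sym val_eqE.
  by rewrite sum_delta mul1r.
apply: congr_big => // l /negbTE ne; rewrite /F ne sumr_const card_ord //.
Qed.

End Lam.

End Spec.

Lemma big_min_le (T : eqType) (r : seq T) (F : T -> nat) x0 i :
  i \in r -> (\big[minn/x0]_(j <- r) F j <= F i)%N.
Proof.
elim: r => [|a r IH] //; rewrite big_cons in_cons => /orP [/eqP ->|ir].
  exact: geq_minl.
exact: leq_trans (geq_minr _ _) (IH ir).
Qed.

Lemma pmin_le n (p : 'I_n.+1 -> nat) i : (pmin p <= p i)%N.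
Proof. by apply: big_min_le; rewrite mem_index_enum. Qed.

Lemma pmin_attain n (p : 'I_n.+1 -> nat) : exists i, pmin p = p i.
Proof.
rewrite /pmin; elim/big_rec: _ => [|i x _ [j ->]]; first by exists ord0.
case: (leqP (p i) (p j)) => h; first by exists i.
by exists j.
Qed.

Unset Implicit Arguments.

Theorem theorem1 (n : nat) (p : 'I_n.+1 -> nat) (hp : forall i, (0 < p i)%N) :
  let k := pmin p in
  let bound : rat := ((#|[set: vec p]| ^ 2)%N)%:R / ((k ^ 2)%N)%:R in
  (forall A B : {set vec p}, cross_intersecting A B ->
     ((#|A| * #|B|)%N)%:R <= bound)
  /\ (forall (i : 'I_n.+1) (j : 'I_(p i)), p i = k ->
        cross_intersecting (dictator j) (dictator j) /\
        ((#|dictator j| * #|dictator j|)%N)%:R = bound)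
  /\ (k <> 2%N ->
      forall A B : {set vec p}, cross_intersecting A B ->
        ((#|A| * #|B|)%N)%:R = bound ->
        exists (i : 'I_n.+1) (j : 'I_(p i)),
          p i = k /\ A = dictator j /\ B = dictator j).
Proof.
move=> k bound.
have hkp : forall i, (k <= p i)%N by move=> i; apply: pmin_le.
have [i0 ki0] := pmin_attain p; rewrite -/k in ki0.
have k0 : (0 < k)%N by rewrite ki0 hp.
have kR : 0 < (k%:R : rat) by rewrite ltr0n.
have NE : (#|[set: vec p]|%:R : rat) = Nr p by rewrite cardsT cardV.
have Np := Nr_gt0 hp.
have bE : bound = Nr p ^+ 2 / k%:R ^+ 2 by rewrite /bound !natrX NE.
have cross_bound : forall A B : {set vec p}, cross_intersecting A B ->
    ((#|A| * #|B|)%N)%:R <= bound.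
  move=> A B H; rewrite bE natrM ler_pdivlMr ?exprn_gt0 //.
  case: (leqP k 1) => hk.
    have k1 : k = 1%N by apply/eqP; rewrite eqn_leq hk k0.
    rewrite k1 expr1n mulr1 expr2 -(cardV p).
    by rewrite ler_pM ?ler0n // ler_nat max_card.
  by rewrite mulrC; apply: (bound_rat hp hk hkp).
split; first exact: cross_bound.
split.
  move=> i j pik; split.
    move=> x y; rewrite /dictator !inE => /eqP xj /eqP yj.
    by rewrite /r_intersecting card_gt0; apply/set0Pn; exists i; rewrite inE xj yj.
  rewrite bE natrM; have := card_dict j; rewrite /sp pik => E.
  have -> : (#|dictator j|%:R : rat) = Nr p / k%:R by rewrite -E mulfK ?lt0r_neq0.
  by rewrite expr2 expr2; field; rewrite lt0r_neq0.
move=> k2 A B H; rewrite bE natrM => E.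
case: (leqP k 1) => hk.
  have k1 : k = 1%N by apply/eqP; rewrite eqn_leq hk k0.
  rewrite k1 expr1n divr1 in E.
  have aN : (#|A| <= #|vec p|)%N := max_card _.
  have bN : (#|B| <= #|vec p|)%N := max_card _.
  have NN : (#|A| * #|B| = #|vec p| * #|vec p|)%N.
    by apply/eqP; rewrite -(eqr_nat rat) !natrM E cardV expr2.
  have Npos : (0 < #|vec p|)%N by rewrite -(ltr0n rat) cardV.
  have aE : #|A| = #|vec p| by nia.
  have bE' : #|B| = #|vec p| by nia.
  have AT : A = [set: vec p] by apply/eqP; rewrite eqEcard subsetT cardsT aE leqnn.
  have BT : B = [set: vec p] by apply/eqP; rewrite eqEcard subsetT cardsT bE' leqnn.
  have p1 : p i0 = 1%N by rewrite -ki0.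
  exists i0, (Ordinal (hp i0)); split => //.
  have DT : dictator (Ordinal (hp i0)) = [set: vec p].
    apply/setP => x; rewrite /dictator !inE; apply/eqP/val_inj => /=.
    by have := ltn_ord (x i0); move: (nat_of_ord (x i0)) => c; rewrite p1; case: c.
  by rewrite DT AT BT.
have k3 : (2 < k)%N by case: k k2 hk {E bound bE hkp cross_bound ki0 k0 kR} => [|[|[|]]].
have hk2 : (1 < k)%N by apply: ltnW.
have E' : k%:R ^+ 2 * (#|A|%:R * #|B|%:R) = Nr p ^+ 2 :> rat.
  by rewrite E mulrC divfK // expf_neq0 // lt0r_neq0.
have [j [c [pj [AD BD]]]] := uniq_main hp hk2 hkp k3 H E'.
by exists j, c.
Qed.
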